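(* Let $n\ge 2$ and let $(T,A(T),B(T))$ be a clean, $d$-sparse signed tree model of an $n$-vertex graph $G$, where $T$ is an ordered full rooted binary tree whose leaves, read from left to right, are $1,\dots,n$ (so $V(G)=[n]$). Let $R$ be the full, complete rooted binary tree whose leaves are $1,\dots,n$ from left to right (so $R$ has depth $\lceil\log n\rceil+1$). Then there exist sets $A(R),B(R)$ such that $(R,A(R),B(R))$ is a $4d\log^2 n$-sparse signed tree model of $G$.
   Context: Tree notation: for a rooted tree $T$, $u\prec_T u'$ means $u$ is a strict ancestor of $u'$, $u\preceq_T u'$ means $u=u'$ or $u\prec_T u'$; for unordered pairs, $uv\preceq_T u'v'$ means ($u\preceq_T u'$ and $v\preceq_T v'$) or ($v\preceq_T u'$ and $u\preceq_T v'$), and $uv\prec_T u'v'$ means $uv\preceq_T u'v'$ and $\{u,v\}\ne\{u',v'\}$. Full: every internal node has two children; complete: all levels filled except possibly the last, whose leaves are left-aligned; depth: maximum number of nodes on a root-to-leaf path. A transversal pair of $T$ is a pair of distinct nodes neither an ancestor of the other; two transversal pairs cross if their endpoints can be named $\{a,b\},\{a',b'\}$ with $a\prec_T a'$ and $b'\prec_T b$. A signed tree model is $(T,A(T),B(T))$ with $T$ a full rooted binary tree and $A(T),B(T)$ disjoint sets of transversal pairs of $T$, no two pairs of $A(T)\cup B(T)$ crossing. It is a model of the graph on the leaf set $L(T)$ in which distinct leaves $u,v$ are adjacent iff some $u'v'\in B(T)$ has $u'v'\preceq_T uv$ and no $u''v''\in A(T)$ has $u'v'\prec_T u''v''\preceq_T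 uv$. It is clean if every pair of siblings of $T$ lies in $A(T)\cup B(T)$, and $c$-sparse if $|A(T)\cup B(T)|\le c\,|V(T)|$. $\log$ is base 2. *)

(* Defs.v *)
From Stdlib Require Import Reals.
From mathcomp Require Import all_boot.

Set Implicit Arguments.
Unset Strict Implicit.
Unset Printing Implicit Defensive.

Inductive btree := BLeaf | BNode of btree & btree.

(* Nodes are addressed by root-to-node paths: false = left child,
   true = right child.  u is an ancestor of v iff u is a prefix of v. *)
Definition npath := seq bool.

Fixpoint is_node (t : btree) (p : npath) : bool :=
  match p, t with
  | [::], _ => true
  | b :: p', BNode l r => is_node (if b then r else l) p'
  | _ :: _, BLeaf => false
  end.

(* All nodes of t (a duplicate-free list), so |V(t)| = size (nodes t). *)
Fixpoint nodes (t : btree) : seq npath :=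
  [::] :: match t with
          | BLeaf => [::]
          | BNode l r => map (cons false) (nodes l) ++ map (cons true) (nodes r)
          end.

Fixpoint leaves (t : btree) : seq npath :=
  match t with
  | BLeaf => [:: [::]]
  | BNode l r => map (cons false) (leaves l) ++ map (cons true) (leaves r)
  end.

(* The leaf of t labelled by vertex k : 'I_n (the (k+1)-th leaf from the left). *)
Definition leaf (t : btree) (k : nat) : npath := nth [::] (leaves t) k.

(* depth = maximum number of nodes on a root-to-leaf npath *)
Fixpoint depth (t : btree) : nat :=
  match t with
  | BLeaf => 1
  | BNode l r => (maxn (depth l) (depth r)).+1
  end.

Fixpoint lexle (q p : npath) : bool :=
  match q, p with
  | b :: q', c :: p' => (~~ b && c) || ((b == c) && lexle q' p')
  | _, _ => true
  end.

(* complete: all levels filled except possibly the last, whose nodes are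
   left-aligned.  Level l consists of the nodes at paths of length l. *)
Definition complete (t : btree) : Prop :=
  (forall p : npath, size p < (depth t).-1 -> is_node t p) /\
  (forall p q : npath, size p = (depth t).-1 -> size q = size p ->
      lexle q p -> is_node t p -> is_node t q).

Definition anc (u v : npath) : bool := prefix u v.
Definition sanc (u v : npath) : bool := prefix u v && (u != v).

Definition same_pair (u v u' v' : npath) : bool :=
  ((u == u') && (v == v')) || ((u == v') && (v == u')).
Definition ple (u v u' v' : npath) : bool :=
  (anc u u' && anc v v') || (anc v u' && anc u v').
Definition plt (u v u' v' : npath) : bool :=
  ple u v u' v' && ~~ same_pair u v u' v'.

Definition transversal (t : btree) (u v : npath) : bool :=
  [&& is_node t u, is_node t v, u != v, ~~ anc u v & ~~ anc v u].

Definition crossing (a b a' b' : npath) : bool :=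
  [|| sanc a a' && sanc b' b, sanc b a' && sanc b' a,
      sanc a b' && sanc a' b | sanc b b' && sanc a' a].

(* A set of unordered pairs of nodes is represented by a relation S;
   the unordered pair {u,v} belongs to it iff S u v || S v u. *)
Definition inP (S : rel npath) (u v : npath) : bool := S u v || S v u.

Definition signed_tree_model (t : btree) (A B : rel npath) : Prop :=
  (forall u v, A u v -> transversal t u v) /\
  (forall u v, B u v -> transversal t u v) /\
  (forall u v, ~~ (inP A u v && inP B u v)) /\
  (forall a b a' b', inP A a b || inP B a b -> inP A a' b' || inP B a' b' ->
     ~~ crossing a b a' b').

Definition model_adj (A B : rel npath) (u v : npath) : Prop :=
  exists u' v', inP B u' v' /\ ple u' v' u v /\
    ~ (exists u'' v'', inP A u'' v'' /\ plt u' v' u'' v'' /\ ple u'' v'' u v).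

Definition models (n : nat) (t : btree) (A B : rel npath) (G : rel 'I_n) : Prop :=
  forall i j : 'I_n, i != j -> (G i j <-> model_adj A B (leaf t i) (leaf t j)).

Definition clean (t : btree) (A B : rel npath) : Prop :=
  forall p : npath, is_node t (rcons p false) ->
    inP A (rcons p false) (rcons p true) || inP B (rcons p false) (rcons p true).

(* |A ∪ B| : number of unordered pairs of distinct nodes in A ∪ B *)
Definition pair_card (t : btree) (A B : rel npath) : nat :=
  size [seq uv <- [seq (u, v) | u <- nodes t, v <- nodes t] |
        (index uv.1 (nodes t) < index uv.2 (nodes t)) &&
        (inP A uv.1 uv.2 || inP B uv.1 uv.2)].

Definition sparse (c : R) (t : btree) (A B : rel npath) : Prop :=
  Rle (INR (pair_card t A B)) (Rmult c (INR (size (nodes t)))).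

Definition log2 (x : R) : R := Rdiv (ln x) (ln (INR 2)).

(* Main.v *)
Require Import Defs.
From Stdlib Require Import Reals Lra.
From mathcomp Require Import all_boot zify.
Set Implicit Arguments.
Unset Strict Implicit.
Unset Printing Implicit Defensive.

Definition nl t := size (leaves t).

Arguments nl : simpl never.

Lemma nlN l r : nl (BNode l r) = nl l + nl r.
Proof. by rewrite /nl /= size_cat !size_map. Qed.

Lemma nl_pos t : 0 < nl t.
Proof. elim: t => //= l IHl r IHr; rewrite nlN; lia. Qed.

Lemma leafN l r k : k < nl (BNode l r) ->
  leaf (BNode l r) k = if k < nl l then false :: leaf l k else true :: leaf r (k - nl l).
Proof.
rewrite nlN /leaf /= nth_cat size_map => hk; rewrite -/(nl l).
case: ifP => h; first by rewrite (nth_map [::]).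
by rewrite (nth_map [::]) //; rewrite -/(nl r); lia.
Qed.

Lemma leaf_node t k : k < nl t -> is_node t (leaf t k).
Proof.
elim: t k => [|l IHl r IHr] k /=; first by rewrite /leaf; case: k.
move=> hk; rewrite leafN //; case: ifP => h /=; first exact: IHl.
apply: IHr; rewrite nlN in hk; lia.
Qed.

Lemma leaf_pre t k k' : k < nl t -> k' < nl t -> prefix (leaf t k) (leaf t k') -> k = k'.
Proof.
elim: t k k' => [|l IHl r IHr] k k' /=; first by rewrite /nl /=; lia.
move=> hk hk'; rewrite !leafN //; case: ifP => h1; case: ifP => h2 //=.
  by move/IHl; apply.
move=> /IHr; rewrite nlN in hk hk'; lia.
Qed.

Lemma node_leaf t p : is_node t p -> exists2 k, k < nl t & prefix p (leaf t k).
Proof.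
elim: t p => [|l IHl r IHr] [|b p] //=.
- by move=> _; exists 0; rewrite ?nl_pos ?prefix0s.
- by move=> _; exists 0; rewrite ?nl_pos ?prefix0s.
case: b => /= h.
  have [k hk hp] := IHr _ h; exists (nl l + k); first by rewrite nlN; lia.
  rewrite leafN ?nlN; last by lia. by rewrite ifF; [rewrite /= addKn| lia].
have [k hk hp] := IHl _ h; exists k; first by rewrite nlN; lia.
by rewrite leafN ?nlN ?hk //; lia.
Qed.

Lemma node_pre t p c : is_node t p -> prefix c p -> is_node t c.
Proof.
elim: t p c => [|l IHl r IHr] [|b p] [|b' c] //=.
move=> h /andP[/eqP -> hc]; case: b h => h; [apply: IHr h hc|apply: IHl h hc].
Qed.

Lemma pre_size (a b : npath) : prefix a b -> size a <= size b.
Proof. by move/prefixP=> [s ->]; rewrite size_cat leq_addr. Qed.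

Lemma pre_eqsize (a b : npath) : prefix a b -> size b <= size a -> a = b.
Proof. move/prefixP=> [s ->]; rewrite size_cat; case: s => [|x s]; rewrite ?cats0 //=; lia. Qed.

Lemma pre_antisym (a b : npath) : prefix a b -> prefix b a -> a = b.
Proof. by move=> h1 h2; apply: pre_eqsize h1 (pre_size h2). Qed.

Lemma pre_total (a b c : npath) : prefix a c -> prefix b c -> prefix a b || prefix b a.
Proof.
elim: c a b => [|x c IH] [|y a] [|z b] //= ; rewrite ?prefix0s ?orbT //.
move=> /andP[/eqP -> h1] /andP[/eqP -> h2]; rewrite eqxx /=; exact: IH.
Qed.

Lemma ival_node t p : exists lo hi, lo <= hi <= nl t /\
  forall k, k < nl t -> prefix p (leaf t k) = (lo <= k < hi).
Proof.
elim: t p => [|l IHl r IHr] [|b p].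
- exists 0, (nl BLeaf); split; [by rewrite leqnn | move=> k hk; by rewrite prefix0s hk].
- exists 0, 0; split => // k; rewrite /nl /leaf /=; case: k => //=; lia.
- exists 0, (nl (BNode l r)); split; [by rewrite leqnn | move=> k hk; by rewrite prefix0s hk].
case: b.
  have [lo [hi [h1 h2]]] := IHr p; exists (nl l + lo), (nl l + hi); split; first by rewrite nlN; lia.
  move=> k hk; rewrite leafN //; case: ifP => h /=; first by lia.
  rewrite h2; [lia|]; rewrite nlN in hk; lia.
have [lo [hi [h1 h2]]] := IHl p; exists lo, hi; split; first by rewrite nlN; lia.
move=> k hk; rewrite leafN //; case: ifP => h /=; first by rewrite h2.
lia.
Qed.

Lemma mem_nodes t p : (p \in nodes t) = is_node t p.
Proof.
elim: t p => [|l IHl r IHr] p; first by case: p => [|b p]; rewrite inE.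
case: p => [|b p]; first by rewrite inE.
rewrite /= in_cons /= mem_cat; case: b.
  have -> : (true :: p \in map (cons false) (nodes l)) = false by apply/mapP => -[].
  by rewrite (mem_map (fun x y => _)) ?IHr //; move=> x y [].
have -> : (false :: p \in map (cons true) (nodes r)) = false by apply/mapP => -[].
by rewrite orbF (mem_map (fun x y => _)) ?IHl //; move=> x y [].
Qed.

Lemma uniq_nodes t : uniq (nodes t).
Proof.
elim: t => [|l IHl r IHr] //=.
rewrite cat_uniq !map_inj_uniq //; try by move=> x y [].
rewrite IHl IHr mem_cat /= andbT; apply/andP; split.
  by apply/negP => /orP[] /mapP [].
by apply/hasPn => x /mapP [y _ ->]; apply/mapP => -[].
Qed.

Lemma size_nodes t : size (nodes t) = (nl t).*2.-1.
Proof.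
elim: t => [|l IHl r IHr] //=; rewrite size_cat !size_map IHl IHr nlN.
have := nl_pos l; have := nl_pos r; lia.
Qed.

Definition cov t o (S : pred nat) (a : npath) :=
  all (fun k => prefix a (leaf t k) ==> S (o + k)) (iota 0 (nl t)).

Lemma covP t o (S : pred nat) a : reflect (forall k, k < nl t -> prefix a (leaf t k) -> S (o+k)) (cov t o S a).
Proof.
apply: (iffP allP) => h k.
  by move=> hk hp; move: (h k); rewrite mem_iota /= hk => /(_ isT); rewrite hp.
by rewrite mem_iota /= => hk; apply/implyP; apply: h.
Qed.

Definition sprefs (a : npath) := [seq take j a | j <- iota 0 (size a)].

Definition inC t o (S : pred nat) a := [&& is_node t a, cov t o S a & all (fun c => ~~ cov t o S c) (sprefs a)].

Lemma sprefs_cons b (a : npath) : sprefs (b :: a) = [::] :: map (cons b) (sprefs a).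
Proof.
rewrite /sprefs /= (iotaDl 1 0) -!map_comp; congr (_ :: _).

Qed.

Lemma cov_false l r o (S : pred nat) c : cov (BNode l r) o S (false :: c) = cov l o S c.
Proof.
apply/covP/covP => h k hk.
  move=> hp; apply: h; first by rewrite nlN; lia.
  by rewrite leafN ?nlN ?hk; [|lia].
rewrite leafN //; case: ifP => hkl //= hp; exact: h.
Qed.

Lemma cov_true l r o (S : pred nat) c : cov (BNode l r) o S (true :: c) = cov r (o + nl l) S c.
Proof.
apply/covP/covP => h k hk.
  move=> hp; have := h (nl l + k); rewrite nlN leafN ?nlN; last by lia.
  rewrite ifF; last by lia. rewrite addKn addnA; apply; [lia | done].
rewrite leafN //; case: ifP => hkl //= hp.
have := h (k - nl l); rewrite nlN in hk; rewrite -addnA subnKC; last by lia.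
by apply; [lia|].
Qed.

Definition ival lo hi : pred nat := fun k => lo <= k < hi.

Lemma cov_root t o lo hi : cov t o (ival lo hi) [::] = (lo <= o) && (o + nl t <= hi).
Proof.
have hp := nl_pos t.
apply/covP/andP.
  move=> h; split.
    by have := h 0 hp (prefix0s _); rewrite /ival; lia.
  by have := h (nl t).-1; rewrite /ival prefix0s; move=> /(_ _ isT); lia.
by move=> [h1 h2] k hk _; rewrite /ival; lia.
Qed.

Fixpoint dec t o lo hi : seq npath :=
  if (lo <= o) && (o + nl t <= hi) then [:: [::]] else
  match t with
  | BLeaf => [::]
  | BNode l r => map (cons false) (dec l o lo hi) ++ map (cons true) (dec r (o + nl l) lo hi)
  end.

Lemma inC_dec t o lo hi a : inC t o (ival lo hi) a -> a \in dec t o lo hi.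
Proof.
elim: t o a => [|l IHl r IHr] o a.
  case: a => [|b a]; last by case/andP.
  move=> /and3P[_ hc _]; by rewrite /= -cov_root hc inE.
rewrite /=; case: ifP => hr.
  case: a => [|b a]; first by rewrite inE.
  have hc0 : cov (BNode l r) o (ival lo hi) [::] by rewrite cov_root.
  by rewrite /inC sprefs_cons => /and3P[_ _ /andP[/negP]].
case: a => [|b a].
  by move=> /and3P[_ hc _]; move: hc; rewrite cov_root hr.
rewrite /inC sprefs_cons /= all_map => /and4P[hn hc _ ha].
rewrite mem_cat; case: b hn hc ha => hn hc ha; apply/orP; [right|left];
  rewrite (mem_map (fun x y => _)); try by move=> x y [].
  apply: IHr; rewrite /inC hn -(cov_true l) hc /=; apply: sub_all ha => c /=; by rewrite (cov_true l).
apply: IHl; rewrite /inC hn -(cov_false _ r) hc /=; apply: sub_all ha => c /=; by rewrite (cov_false _ r).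
Qed.

Lemma dec_empty t o lo hi : (hi <= o) || (o + nl t <= lo) -> dec t o lo hi = [::].
Proof.
elim: t o => [|l IHl r IHr] o h /=.
  by rewrite ifF //; move: h; rewrite /nl /=; lia.
have := nl_pos l; have := nl_pos r; move: h; rewrite nlN => h h1 h2.
rewrite ifF; last by (try rewrite nlN); lia.
by rewrite IHl ?IHr //; lia.
Qed.

Lemma depth_pos t : 0 < depth t. Proof. by case: t. Qed.

Lemma depth_leaf t : depth t = 1 -> t = BLeaf.
Proof. by case: t => //= l r; have := depth_pos l; lia. Qed.

Lemma dec_full t o lo hi : lo <= o -> o + nl t <= hi -> dec t o lo hi = [:: [::]].
Proof. by case: t => [|l r] /= h1 h2; rewrite ifT // h1 h2. Qed.

Ltac mlia := unfold npath in *; lia.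

Lemma dec_pre t o lo hi : lo <= o -> size (dec t o lo hi) <= maxn 1 (depth t).-1.
Proof.
elim: t o => [|l IHl r IHr] o h /=; first by case: ifP.
case: ifP => hr //=; first by lia.
have hl := nl_pos l; have hrr := nl_pos r.
rewrite size_cat !size_map.
case: (leqP hi (o + nl l)) => hh.
  rewrite (dec_empty (t:=r)) /=; last by rewrite hh.
  have := IHl o h; mlia.
rewrite dec_full //; last by lia.
case: (boolP (depth r == 1)) => [/eqP /depth_leaf hrl | hd].
  by subst r; move: hr; rewrite nlN (_ : nl BLeaf = 1) // h /=; lia.
have := IHr (o + nl l) ltac:(lia); have := depth_pos r; rewrite /=; mlia.
Qed.

Lemma dec_suf t o lo hi : o + nl t <= hi -> size (dec t o lo hi) <= maxn 1 (depth t).-1.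
Proof.
elim: t o => [|l IHl r IHr] o h /=; first by case: ifP.
case: ifP => hr //=; first by lia.
have hl := nl_pos l; have hrr := nl_pos r.
rewrite nlN in h hr.
rewrite size_cat !size_map.
case: (leqP (o + nl l) lo) => hh.
  rewrite (dec_empty (t:=l)) /=; last by rewrite hh orbT.
  have := IHr (o + nl l) ltac:(lia); mlia.
rewrite (dec_full (t:=r)); [|lia|lia].
case: (boolP (depth l == 1)) => [/eqP /depth_leaf hrl | hd].
  by subst l; move: hr hh; rewrite (_ : nl BLeaf = 1) //; lia.
have := IHl o ltac:(lia); have := depth_pos l; rewrite /=; mlia.
Qed.

Lemma dec_gen t o lo hi : size (dec t o lo hi) <= maxn 1 (2 * (depth t - 2)).
Proof.
elim: t o => [|l IHl r IHr] o /=; first by case: ifP.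
case: ifP => hr //=; first by lia.
have hl := nl_pos l; have hrr := nl_pos r.
rewrite nlN in hr.
rewrite size_cat !size_map.
case: (leqP hi (o + nl l)) => hh.
  rewrite (dec_empty (t:=r)) /=; last by rewrite hh.
  have := IHl o; mlia.
case: (leqP (o + nl l) lo) => hh2.
  rewrite (dec_empty (t:=l)) /=; last by rewrite hh2 orbT.
  have := IHr (o + nl l); mlia.
have := @dec_suf l o lo hi ltac:(lia).
have := @dec_pre r (o + nl l) lo hi ltac:(lia).
case: (boolP (depth l == 1)) => [/eqP /depth_leaf hrl | hd].
  case: (boolP (depth r == 1)) => [/eqP /depth_leaf hrr2 | hd2].
    by subst l r; move: hr hh hh2; rewrite (_ : nl BLeaf = 1) //; lia.
  have := depth_pos r; have := depth_pos l; mlia.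
have := depth_pos r; have := depth_pos l; mlia.
Qed.

Lemma inPC (S : rel npath) u v : inP S u v = inP S v u.
Proof. by rewrite /inP orbC. Qed.

Lemma transvC t u v : Defs.transversal t u v = Defs.transversal t v u.
Proof. by rewrite /Defs.transversal; case: (is_node t u); case: (is_node t v); rewrite //= eq_sym; case: (u == v); case: (anc u v); case: (anc v u). Qed.

Lemma pleC1 u v x y : ple u v x y = ple u v y x.
Proof. by rewrite /ple orbC [anc v x && _]andbC [anc u x && _]andbC. Qed.

Lemma ple_antisym u v u' v' : ple u v u' v' -> ple u' v' u v -> same_pair u v u' v'.
Proof.
rewrite /ple /same_pair /anc => /orP[]/andP[h1 h2] /orP[]/andP[h3 h4].
- by rewrite (pre_antisym h1 h3) (pre_antisym h2 h4) !eqxx.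
- have e1 : u = u' := pre_antisym h1 (prefix_trans h4 (prefix_trans h2 h3)).
  have e2 : v = v' := pre_antisym h2 (prefix_trans h3 (prefix_trans h1 h4)).
  by subst; rewrite !eqxx.
- have e1 : u = u' := pre_antisym (prefix_trans h2 (prefix_trans h4 h1)) h3.
  have e2 : v = v' := pre_antisym (prefix_trans h1 (prefix_trans h3 h2)) h4.
  by subst; rewrite !eqxx.
- by rewrite (pre_antisym h1 h4) (pre_antisym h2 h3) !eqxx orbT.
Qed.

Lemma same_inP (S : rel npath) u v u' v' : same_pair u v u' v' -> inP S u v = inP S u' v'.
Proof. by case/orP=> /andP[/eqP -> /eqP ->] //; rewrite inPC. Qed.

Lemma adj_char (A B : rel npath) x y p q :
  inP A p q || inP B p q -> ~~ (inP A p q && inP B p q) -> ple p q x y ->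
  (forall p' q', inP A p' q' || inP B p' q' -> ple p' q' x y -> ple p' q' p q) ->
  (model_adj A B x y <-> inP B p q).
Proof.
move=> hpq hd hle hmax; split.
  move=> [u' [v' [hB [hl hno]]]].
  case/orP: hpq => // hA.
  exfalso; apply: hno; exists p, q; split => //; split => //.
  have h := hmax u' v' ltac:(by rewrite hB orbT) hl.
  rewrite /plt h /=; apply/negP => hs.
  by move: hd; rewrite hA -(same_inP B hs) hB.
move=> hB; exists p, q; split => //; split => //.
move=> [u'' [v'' [hA [hlt hl]]]].
have h := hmax u'' v'' ltac:(by rewrite hA) hl.
move: hlt; rewrite /plt => /andP[h2 hn].
have hs := ple_antisym h2 h.
by move: hd; rewrite hB andbT (same_inP A hs) hA.
Qed.

Lemma lca (x y : npath) : ~~ prefix x y -> ~~ prefix y x ->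
  exists p b, prefix (rcons p b) x && prefix (rcons p (~~ b)) y.
Proof.
elim: x y => [|c x IH] [|d y] //=; rewrite ?prefix0s //.
case: (boolP (c == d)) => [/eqP -> | hcd] /= h1 h2.
  rewrite eqxx /= in h2; have [p [b hp]] := IH y h1 h2; exists (d :: p), b => /=; by rewrite !eqxx.
exists [::], c => /=; rewrite !prefix0s eqxx /= andbT.
by clear h1 h2 IH; case: c d hcd => [] [].
Qed.

Definition AB (A B : rel npath) u v := inP A u v || inP B u v.

Lemma ABC A B u v : AB A B u v = AB A B v u.
Proof. by rewrite /AB inPC [inP B _ _]inPC. Qed.

Lemma stm_trans T A B u v : signed_tree_model T A B -> AB A B u v -> Defs.transversal T u v.
Proof.
move=> [hA [hB _]]; rewrite /AB /inP => /orP[]/orP[] h.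
- exact: hA.
- by rewrite transvC; apply: hA.
- exact: hB.
- by rewrite transvC; apply: hB.
Qed.

Lemma stm_nodes T A B u v : signed_tree_model T A B -> AB A B u v -> (u \in nodes T) && (v \in nodes T).
Proof. by move=> h /(stm_trans h) /and5P[hu hv _ _ _]; rewrite !mem_nodes hu hv. Qed.

Lemma stm_nocross T A B u v u' v' : signed_tree_model T A B -> AB A B u v -> AB A B u' v' ->
  ~~ crossing u v u' v'.
Proof. by move=> [_ [_ [_ h]]]; apply: h. Qed.

Lemma chain T A B (x y u v u' v' : npath) : signed_tree_model T A B ->
  AB A B u v -> AB A B u' v' -> prefix u x -> prefix v y -> prefix u' x -> prefix v' y ->
  (prefix u u' && prefix v v') || (prefix u' u && prefix v' v).
Proof.
move=> hT h1 h2 hu hv hu' hv'.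
have /orP[a1|a1] := pre_total hu hu'; have /orP[a2|a2] := pre_total hv hv'.
- by rewrite a1 a2.
- case: (boolP (u == u')) => [/eqP e|n1]; first by subst; rewrite prefix_refl a2 orbT.
  case: (boolP (v == v')) => [/eqP e|n2]; first by subst; rewrite a1 prefix_refl.
  have := stm_nocross hT h1 h2; rewrite /crossing /sanc a1 a2 n1 /=.
  by rewrite eq_sym n2.
- case: (boolP (u == u')) => [/eqP e|n1]; first by subst; rewrite prefix_refl a2.
  case: (boolP (v == v')) => [/eqP e|n2]; first by subst; rewrite a1 prefix_refl orbT.
  have := stm_nocross hT h2 h1; rewrite /crossing /sanc a1 a2 n2 /=.
  by rewrite eq_sym n1.
- by rewrite a1 a2 orbT.
Qed.

Lemma deepest T A B (x y : npath) : signed_tree_model T A B ->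
  (exists u v, [/\ AB A B u v, prefix u x & prefix v y]) ->
  exists u v, [/\ AB A B u v, prefix u x, prefix v y &
    forall u' v', AB A B u' v' -> prefix u' x -> prefix v' y -> prefix u' u && prefix v' v].
Proof.
move=> hT hex.
pose Q m (uv : npath * npath) := [&& AB A B uv.1 uv.2, prefix uv.1 x, prefix uv.2 y & size uv.1 + size uv.2 == m].
pose P m := has (Q m) [seq (u, v) | u <- nodes T, v <- nodes T].
have exP : exists m, P m.
  case: hex => u [v [h1 h2 h3]]; exists (size u + size v); apply/hasP; exists (u, v).
    by have /andP[] := stm_nodes hT h1; apply: allpairs_f.
  by rewrite /Q /= h1 h2 h3 eqxx.
have ubP : forall m, P m -> m <= size x + size y.
  move=> m /hasP [[u v] _] /and4P[_ /pre_size h1 /pre_size h2 /eqP <-]; unfold npath in *; lia.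
case: (ex_maxnP exP ubP) => m /hasP [[u v] _] /and4P[h1 h2 h3 /eqP hm] hmax /=.
exists u, v; split => // u' v' h1' h2' h3'.
have /orP[/andP[a1 a2]|] := chain hT h1 h1' h2 h3 h2' h3'; last by [].
have : P (size u' + size v').
  apply/hasP; exists (u', v'); first by have /andP[] := stm_nodes hT h1'; apply: allpairs_f.
  by rewrite /Q /= h1' h2' h3' eqxx.
move/hmax; rewrite -hm => hs.
have s1 := pre_size a1; have s2 := pre_size a2.
have e1 : u = u' by apply: pre_eqsize a1 _; unfold npath in *; lia.
have e2 : v = v' by apply: pre_eqsize a2 _; unfold npath in *; lia.
by rewrite e1 e2 !prefix_refl.
Qed.

Lemma clean_ex T A B i j : clean T A B -> i < nl T -> j < nl T -> i != j ->
  exists u v, [/\ AB A B u v, prefix u (leaf T i) & prefix v (leaf T j)].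
Proof.
move=> hc hi hj hij.
have n1 : ~~ prefix (leaf T i) (leaf T j).
  by apply/negP => /(leaf_pre hi hj) e; move: hij; rewrite e eqxx.
have n2 : ~~ prefix (leaf T j) (leaf T i).
  by apply/negP => /(leaf_pre hj hi) e; move: hij; rewrite e eqxx.
have [p [b /andP[hp1 hp2]]] := lca n1 n2.
have hn : is_node T (rcons p false).
  case: b hp1 hp2 => /= hp1 hp2.
    by apply: node_pre (leaf_node hj) hp2.
  by apply: node_pre (leaf_node hi) hp1.
have hab := hc p hn.
case: b hp1 hp2 => /= hp1 hp2.
  by exists (rcons p true), (rcons p false); split => //; rewrite ABC.
by exists (rcons p false), (rcons p true).
Qed.

Lemma inC_max t o (S : pred nat) a c : inC t o S a -> prefix c a -> c != a -> ~~ cov t o S c.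
Proof.
move=> /and3P[_ _ /allP h] hp hn; apply: h.
have hs : size c < size a.
  have := pre_size hp; rewrite leq_eqVlt => /orP[/eqP e|//].
  by move: hn; rewrite (pre_eqsize hp) ?e ?eqxx.
apply/mapP; exists (size c); first by rewrite mem_iota.
by move: hp; rewrite prefixE => /eqP.
Qed.

Lemma cov_mono t o (S1 S2 : pred nat) c : cov t o S1 c -> (forall k, S1 k -> S2 k) -> cov t o S2 c.
Proof. by move=> /covP h h12; apply/covP => k hk hp; apply: h12; apply: h. Qed.

Lemma inC_exists t (S : pred nat) i : i < nl t -> S i -> exists a, inC t 0 S a && prefix a (leaf t i).
Proof.
move=> hi hS; set x := leaf t i.
pose P k := cov t 0 S (take k x).
have exP : exists k, P k.
  exists (size x); rewrite /P take_size; apply/covP => k hk hp.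
  by rewrite add0n -(leaf_pre hi hk hp).
case: (ex_minnP exP) => k hk hmin.
have hk2 : cov t 0 S (take k x) := hk.
exists (take k x); rewrite prefix_take andbT /inC hk2 /=.
apply/andP; split; first by apply: node_pre (leaf_node hi) (prefix_take _ _).
apply/allP => c /mapP [j]; rewrite mem_iota add0n => /andP[_ hj] ->.
have hjk : j < k by move: hj; rewrite size_take; case: ifP => hh //; unfold npath in *; lia.
rewrite take_takel; last by lia.
apply/negP => hc; have := hmin j hc; lia.
Qed.

Definition LT T u : pred nat := fun k => prefix u (leaf T k).

Lemma LT_mono T u u' k : prefix u' u -> LT T u k -> LT T u' k.
Proof. by rewrite /LT => h1 h2; apply: prefix_trans h1 h2. Qed.

Definition gen T A B Rt a b u v :=
  [&& AB A B u v, inC Rt 0 (LT T u) a & inC Rt 0 (LT T v) b].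

Definition deep T A B Rt a b u v :=
  gen T A B Rt a b u v &&
  all (fun uv => gen T A B Rt a b uv.1 uv.2 ==> (prefix uv.1 u && prefix uv.2 v))
      [seq (u, v) | u <- nodes T, v <- nodes T].

Definition mkR T A B Rt (S : rel npath) : rel npath := fun a b =>
  has (fun uv => deep T A B Rt a b uv.1 uv.2 && inP S uv.1 uv.2)
      [seq (u, v) | u <- nodes T, v <- nodes T].

Lemma genC T A B Rt a b u v : gen T A B Rt a b u v = gen T A B Rt b a v u.
Proof. by rewrite /gen ABC; case: (AB _ _ _ _); case: (inC _ _ _ a); case: (inC _ _ _ b). Qed.

Lemma gen_nodes T A B Rt a b u v : signed_tree_model T A B -> gen T A B Rt a b u v ->
  (u, v) \in [seq (u, v) | u <- nodes T, v <- nodes T].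
Proof. by move=> hT /and3P[h _ _]; have /andP[] := stm_nodes hT h; apply: allpairs_f. Qed.

Lemma deepP T A B Rt a b u v : signed_tree_model T A B ->
  deep T A B Rt a b u v <-> gen T A B Rt a b u v /\
    forall u' v', gen T A B Rt a b u' v' -> prefix u' u && prefix v' v.
Proof.
move=> hT; split.
  move=> /andP[hg /allP h]; split => // u' v' hg'.
  by have := h _ (gen_nodes hT hg'); rewrite hg'.
move=> [hg h]; rewrite /deep hg; apply/allP => [[u' v']] _ /=; apply/implyP; exact: h.
Qed.


Lemma deepC T A B Rt a b u v : signed_tree_model T A B ->
  deep T A B Rt a b u v -> deep T A B Rt b a v u.
Proof.
move=> hT /(deepP _ _ _ _ _ hT) [hg h]; apply/(deepP _ _ _ _ _ hT); rewrite -genC; split => // u' v'.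
by rewrite -genC => /h; rewrite andbC.
Qed.

Lemma mkRP T A B Rt S a b : signed_tree_model T A B ->
  reflect (exists u v, deep T A B Rt a b u v /\ inP S u v) (mkR T A B Rt S a b).
Proof.
move=> hT; apply: (iffP hasP).
  by move=> [[u v] _ /andP[h1 h2]]; exists u, v.
move=> [u [v [h1 h2]]]; exists (u, v); last by rewrite /= h1 h2.
by apply: gen_nodes hT (proj1 (proj1 (deepP _ _ _ _ _ hT) h1)).
Qed.

Lemma mkRC T A B Rt S a b : signed_tree_model T A B ->
  mkR T A B Rt S a b = mkR T A B Rt S b a.
Proof.
move=> hT; apply/(mkRP _ _ _ _ hT)/(mkRP _ _ _ _ hT) => -[u [v [h1 h2]]];
  exists v, u; (split; [exact: deepC| by rewrite inPC]).
Qed.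

Lemma inP_mkR T A B Rt S a b : signed_tree_model T A B ->
  inP (mkR T A B Rt S) a b = mkR T A B Rt S a b.
Proof. by move=> hT; rewrite /inP (mkRC _ _ _ _ hT) orbb. Qed.

Lemma deep_uniq T A B Rt a b u v u' v' : signed_tree_model T A B ->
  deep T A B Rt a b u v -> deep T A B Rt a b u' v' -> u = u' /\ v = v'.
Proof.
move=> hT /(deepP _ _ _ _ _ hT) [g1 h1] /(deepP _ _ _ _ _ hT) [g2 h2].
have /andP[a1 a2] := h1 _ _ g2; have /andP[a3 a4] := h2 _ _ g1.
by split; apply: pre_antisym.
Qed.

Lemma LT_disj T u v k : Defs.transversal T u v -> LT T u k -> LT T v k -> False.
Proof.
move=> /and5P[_ _ _ h1 h2] hu hv.
by have := pre_total hu hv; rewrite /anc in h1 h2; rewrite (negbTE h1) (negbTE h2).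
Qed.

Lemma inC_leaf t (S : pred nat) a k : inC t 0 S a -> k < nl t -> prefix a (leaf t k) -> S k.
Proof. by move=> /and3P[_ /covP h _] hk hp; have := h k hk hp; rewrite add0n. Qed.

Lemma inC_node t (S : pred nat) a : inC t 0 S a -> is_node t a.
Proof. by case/and3P. Qed.

Lemma mkR_gen T A B Rt S a b : signed_tree_model T A B -> mkR T A B Rt S a b ->
  exists u v, gen T A B Rt a b u v.
Proof.
move=> hT /(mkRP _ _ _ _ hT) [u [v [/(deepP _ _ _ _ _ hT) [hg _] _]]]; by exists u, v.
Qed.

Lemma ABR_gen T A B Rt a b : signed_tree_model T A B ->
  AB (mkR T A B Rt A) (mkR T A B Rt B) a b -> exists u v, gen T A B Rt a b u v.
Proof.
by move=> hT; rewrite /AB !(inP_mkR _ _ _ _ hT) => /orP[] /(mkR_gen hT).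
Qed.

Lemma gen_trans T A B Rt a b : signed_tree_model T A B -> nl Rt = nl T ->
  (exists u v, gen T A B Rt a b u v) -> Defs.transversal Rt a b.
Proof.
move=> hT hn [u [v /and3P[hab ha hb]]].
have htr := stm_trans hT hab.
have na := inC_node ha; have nb := inC_node hb.
have [ka hka hpa] := node_leaf na; have [kb hkb hpb] := node_leaf nb.
rewrite /Defs.transversal na nb /=.
have ua := inC_leaf ha hka hpa; have vb := inC_leaf hb hkb hpb.
apply/and3P; split.
- apply/negP => /eqP e; subst b; apply: (LT_disj htr ua); exact: (inC_leaf hb hka hpa).
- apply/negP => h; apply: (LT_disj htr (inC_leaf ha hkb (prefix_trans h hpb)) vb).
- apply/negP => h; apply: (LT_disj htr ua (inC_leaf hb hka (prefix_trans h hpa))).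
Qed.

Lemma ABR_nocross T A B Rt a b a' b' : signed_tree_model T A B -> nl Rt = nl T ->
  AB (mkR T A B Rt A) (mkR T A B Rt B) a b -> AB (mkR T A B Rt A) (mkR T A B Rt B) a' b' ->
  sanc a a' -> sanc b' b -> False.
Proof.
move=> hT hn h1 h2 /andP[s1 n1] /andP[s2 n2].
have [u [v /and3P[hab ha hb]]] := ABR_gen hT h1.
have [u' [v' /and3P[hab' ha' hb']]] := ABR_gen hT h2.
have [k hk hpk] := node_leaf (inC_node ha').
have [k' hk' hpk'] := node_leaf (inC_node hb).
have hkT : k < nl T by rewrite -hn.
have hkT' : k' < nl T by rewrite -hn.
have lu := inC_leaf ha hk (prefix_trans s1 hpk).
have lu' := inC_leaf ha' hk hpk.
have lv := inC_leaf hb hk' hpk'.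
have lv' := inC_leaf hb' hk' (prefix_trans s2 hpk').
case: (boolP (prefix u' u)) => hu.
  apply: (negP (inC_max ha' s1 n1)); case/and3P: ha => _ hca _.
  by apply: cov_mono hca _ => j; apply: LT_mono.
have hu2 : prefix u u' by have := pre_total lu lu'; rewrite (negbTE hu) orbF.
case: (boolP (prefix v v')) => hv.
  apply: (negP (inC_max hb s2 n2)); case/and3P: hb' => _ hcb _.
  by apply: cov_mono hcb _ => j; apply: LT_mono.
have hv2 : prefix v' v by have := pre_total lv lv'; rewrite (negbTE hv).
have nu : u != u' by apply/eqP => e; move: hu; rewrite e prefix_refl.
have nv : v' != v by apply/eqP => e; move: hv; rewrite e prefix_refl.
by have := stm_nocross hT hab hab'; rewrite /crossing /sanc hu2 hv2 nu nv.
Qed.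

Lemma ABRC T A B Rt a b : signed_tree_model T A B ->
  AB (mkR T A B Rt A) (mkR T A B Rt B) a b = AB (mkR T A B Rt A) (mkR T A B Rt B) b a.
Proof. by move=> hT; rewrite ABC. Qed.

Lemma stm_R T A B Rt : signed_tree_model T A B -> nl Rt = nl T ->
  signed_tree_model Rt (mkR T A B Rt A) (mkR T A B Rt B).
Proof.
move=> hT hn; split; [|split; [|split]].
- by move=> u v h; apply: (gen_trans hT hn); apply: (mkR_gen hT h).
- by move=> u v h; apply: (gen_trans hT hn); apply: (mkR_gen hT h).
- move=> a b; rewrite !(inP_mkR _ _ _ _ hT); apply/negP => /andP[].
  move=> /(mkRP _ _ _ _ hT) [u [v [d1 i1]]] /(mkRP _ _ _ _ hT) [u' [v' [d2 i2]]].
  have [e1 e2] := deep_uniq hT d1 d2; subst u' v'.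
  by case: hT => _ [_ [/(_ u v) h _]]; move: h; rewrite i1 i2.
move=> a b a' b' h1 h2; apply/negP; rewrite /crossing.
have h1' : AB (mkR T A B Rt A) (mkR T A B Rt B) b a by rewrite -ABRC.
have h2' : AB (mkR T A B Rt A) (mkR T A B Rt B) b' a' by rewrite -ABRC.
case/or4P => /andP[x y].
- exact: (ABR_nocross hT hn h1 h2 x y).
- exact: (ABR_nocross hT hn h1' h2 x y).
- exact: (ABR_nocross hT hn h1 h2' x y).
- exact: (ABR_nocross hT hn h1' h2' x y).
Qed.

Lemma inC_below t (S S' : pred nat) a a' x : inC t 0 S' a' -> inC t 0 S a ->
  (forall k, S k -> S' k) -> prefix a' x -> prefix a x -> prefix a' a.
Proof.
move=> ha' ha hSS h1 h2.
have /orP[//|h] := pre_total h1 h2.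
have [e|hn] := eqVneq a a'; first by rewrite e prefix_refl.
move: (inC_max ha' h hn) => /negP; case; case/and3P: ha => _ hc _; exact: cov_mono hc hSS.
Qed.

Lemma models_R n T A B Rt (Gr : rel 'I_n) : signed_tree_model T A B -> clean T A B ->
  nl T = n -> nl Rt = n -> models T A B Gr ->
  models Rt (mkR T A B Rt A) (mkR T A B Rt B) Gr.
Proof.
move=> hT hc hnT hnR hM i j hij.
have hi : i < nl T by rewrite hnT.
have hj : j < nl T by rewrite hnT.
have hiR : i < nl Rt by rewrite hnR.
have hjR : j < nl Rt by rewrite hnR.
have hij' : (i : nat) != j by [].
have [u [v [hab hux hvy hmax]]] := deepest hT (clean_ex hc hi hj hij').
have hdisj : ~~ (inP A u v && inP B u v) by case: hT => _ [_ [h _]]; apply: h.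
rewrite (hM i j hij).
have -> : model_adj A B (leaf T i) (leaf T j) <-> inP B u v.
  apply: adj_char => //; first by rewrite /ple /anc hux hvy.
  move=> p q hpq; have hqp : AB A B q p by rewrite ABC.
  rewrite /ple /anc => /orP[]/andP[h1 h2].
    by have /andP[-> ->] := hmax p q hpq h1 h2.
  by have /andP[-> ->] := hmax q p hqp h1 h2; rewrite orbT.
have [a /andP[ha hax]] := @inC_exists Rt (LT T u) i hiR hux.
have [b /andP[hb hby]] := @inC_exists Rt (LT T v) j hjR hvy.
have hd : deep T A B Rt a b u v.
  apply/(deepP _ _ _ _ _ hT); split; first by rewrite /gen hab ha hb.
  move=> u' v' /and3P[hab' ha' hb']; apply: hmax => //.
    exact: (inC_leaf ha' hiR hax).
  exact: (inC_leaf hb' hjR hby).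
have hinP : forall S, inP (mkR T A B Rt S) a b = inP S u v.
  move=> S; rewrite (inP_mkR _ _ _ _ hT); apply/(mkRP _ _ _ _ hT)/idP.
    by move=> [u' [v' [d' hS]]]; have [e1 e2] := deep_uniq hT hd d'; rewrite e1 e2.
  by move=> hS; exists u, v.
have hR : model_adj (mkR T A B Rt A) (mkR T A B Rt B) (leaf Rt i) (leaf Rt j) <->
          inP (mkR T A B Rt B) a b.
  apply: adj_char.
  - by rewrite !hinP.
  - by rewrite !hinP.
  - by rewrite /ple /anc hax hby.
  move=> p q hpq; have hqp : AB (mkR T A B Rt A) (mkR T A B Rt B) q p by rewrite ABC.
  rewrite /ple /anc => /orP[]/andP[h1 h2].
    have [u' [v' /and3P[hab' ha' hb']]] := ABR_gen hT hpq.
    have /andP[hu' hv'] := hmax u' v' hab' (inC_leaf ha' hiR h1) (inC_leaf hb' hjR h2).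
    by rewrite (inC_below ha' ha (fun k => @LT_mono T u u' k hu') h1 hax)
               (inC_below hb' hb (fun k => @LT_mono T v v' k hv') h2 hby).
  have [u' [v' /and3P[hab' ha' hb']]] := ABR_gen hT hqp.
  have /andP[hu' hv'] := hmax u' v' hab' (inC_leaf ha' hiR h1) (inC_leaf hb' hjR h2).
  by rewrite (inC_below ha' ha (fun k => @LT_mono T u u' k hu') h1 hax)
             (inC_below hb' hb (fun k => @LT_mono T v v' k hv') h2 hby) orbT.
by split => h; [apply/hR; rewrite hinP | move/hR: h; rewrite hinP].
Qed.

Lemma count_or (X : Type) (a b : pred X) s : count (fun y => a y || b y) s <= count a s + count b s.
Proof. elim: s => //= x s IH; case: (a x); case: (b x) => /=; lia. Qed.

Lemma count_has_le (T1 T2 : Type) (Q : T1 -> pred T2) (l1 : seq T1) (l2 : seq T2) :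
  count (fun y => has (fun x => Q x y) l1) l2 <= sumn [seq count (Q x) l2 | x <- l1].
Proof.
elim: l1 => [|x l1 IH] /=; first by rewrite (eq_count (a2 := pred0)) ?count_pred0.
apply: leq_trans (count_or _ _ _) _; exact: leq_add.
Qed.

Lemma sumn_const_le (X : eqType) (f : X -> nat) (K : nat) (l : seq X) :
  (forall x, x \in l -> f x <= K) -> sumn [seq f x | x <- l] <= K * size l.
Proof.
elim: l => [|x l IH] h //=.
have h1 := h x (mem_head _ _).
have h2 : sumn [seq f x | x <- l] <= K * size l by apply: IH => y hy; apply: h; rewrite in_cons hy orbT.
rewrite mulnS; lia.
Qed.

Lemma count_inj (L : seq (npath * npath)) (iR : npath -> nat) (Cu Cv : pred npath)
  (cu cv : seq npath) : uniq L -> {subset Cu <= cu} -> {subset Cv <= cv} ->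
  count (fun ab => (iR ab.1 < iR ab.2) && ((Cu ab.1 && Cv ab.2) || (Cv ab.1 && Cu ab.2))) L
    <= size cu * size cv.
Proof.
move=> hL hu hv.
set P := fun ab : npath * npath => _.
pose f (ab : npath * npath) := if Cu ab.1 && Cv ab.2 then ab else (ab.2, ab.1).
rewrite -size_filter -(size_map f) -(size_allpairs pair).
apply: uniq_leq_size.
  rewrite map_inj_in_uniq ?filter_uniq //.
  move=> [a b] [a' b']; rewrite !mem_filter /P /f /= => /andP[/andP[i1 h1] _] /andP[/andP[i2 h2] _].
  case: ifP => c1; case: ifP => c2 //.
  - by case=> e1 e2; subst; lia.
  - by case=> e1 e2; subst; lia.
  - by case=> -> ->.
move=> [x y] /mapP [[a b]]; rewrite mem_filter /P /f /= => /andP[/andP[_ h] _].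
case: ifP => c [-> ->].
  by case/andP: c => c1 c2; apply: allpairs_f; [apply: hu|apply: hv].
rewrite c /= in h; case/andP: h => c1 c2; apply: allpairs_f; [apply: hu|apply: hv] => //.
Qed.

Lemma cov_ext t o (S1 S2 : pred nat) c : (forall k, k < nl t -> S1 (o+k) = S2 (o+k)) ->
  cov t o S1 c = cov t o S2 c.
Proof.
move=> h; apply/covP/covP => h' k hk hp; [rewrite -h //| rewrite h //]; exact: h'.
Qed.

Lemma inC_ext t o (S1 S2 : pred nat) c : (forall k, k < nl t -> S1 (o+k) = S2 (o+k)) ->
  inC t o S1 c = inC t o S2 c.
Proof.
move=> h; rewrite /inC (cov_ext _ h); congr [&& _, _ & _].
by apply: eq_all => x; rewrite (cov_ext _ h).
Qed.

Lemma C_sub T Rt u : nl Rt = nl T ->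
  exists cu : seq npath, (forall a, inC Rt 0 (LT T u) a -> a \in cu) /\
                         size cu <= maxn 1 (2 * (depth Rt - 2)).
Proof.
move=> hn; have [lo [hi [_ h]]] := ival_node T u.
exists (dec Rt 0 lo hi); split; last exact: dec_gen.
move=> a ha; apply: inC_dec; rewrite -(inC_ext _ (S1 := LT T u)) //.
by move=> k; rewrite add0n hn => hk; rewrite /LT h.
Qed.

Lemma uniq_L t : uniq [seq (u, v) | u <- nodes t, v <- nodes t].
Proof.
apply: allpairs_uniq; try exact: uniq_nodes.
by move=> [a b] [c d] _ _ /= [-> ->].
Qed.

Lemma sparse_count T A B Rt : signed_tree_model T A B -> nl Rt = nl T ->
  pair_card Rt (mkR T A B Rt A) (mkR T A B Rt B) <=
  (maxn 1 (2 * (depth Rt - 2))) * (maxn 1 (2 * (depth Rt - 2))) * pair_card T A B.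
Proof.
move=> hT hn; set M := maxn 1 _.
rewrite /pair_card [X in X <= _]size_filter.
set LTp := [seq uv <- [seq (u, v) | u <- nodes T, v <- nodes T] |
        (index uv.1 (nodes T) < index uv.2 (nodes T)) && (inP A uv.1 uv.2 || inP B uv.1 uv.2)].
pose Q (uv : npath * npath) (ab : npath * npath) :=
  (index ab.1 (nodes Rt) < index ab.2 (nodes Rt)) &&
  ((inC Rt 0 (LT T uv.1) ab.1 && inC Rt 0 (LT T uv.2) ab.2) ||
   (inC Rt 0 (LT T uv.2) ab.1 && inC Rt 0 (LT T uv.1) ab.2)).
apply: (@leq_trans (count (fun ab => has (fun uv => Q uv ab) LTp) [seq (u, v) | u <- nodes Rt, v <- nodes Rt])).
  apply: sub_count => -[a b] /= /andP[hi hab].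
  have [u0 [v0 /and3P[h0 ha hb]]] := ABR_gen hT hab.
  have /andP[nu nv] := stm_nodes hT h0.
  have /and5P[_ _ huv _ _] := stm_trans hT h0.
  apply/hasP; have [lt|ge] := ltnP (index u0 (nodes T)) (index v0 (nodes T)).
    have h0' : inP A u0 v0 || inP B u0 v0 := h0.
    exists (u0, v0); first by rewrite mem_filter /= lt h0' allpairs_f.
    by rewrite /Q /= hi ha hb.
  have lt : index v0 (nodes T) < index u0 (nodes T).
    rewrite ltn_neqAle ge andbT; apply/negP => /eqP e.
    by move: huv; rewrite (index_inj [::] nu nv (esym e)) eqxx.
  have h0' : inP A v0 u0 || inP B v0 u0 by rewrite -/(AB A B v0 u0) ABC.
  exists (v0, u0); first by rewrite mem_filter /= lt h0' allpairs_f.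
  by rewrite /Q /= hi ha hb orbT.
apply: leq_trans (count_has_le _ _ _) _.
apply: sumn_const_le => [[u v]] _ /=.
have [cu [hcu scu]] := @C_sub T Rt u hn.
have [cv [hcv scv]] := @C_sub T Rt v hn.
apply: leq_trans (count_inj (index^~ (nodes Rt)) (uniq_L Rt) hcu hcv) _.
exact: leq_mul.
Qed.

Lemma full_levels K t : (forall p : npath, size p <= K -> is_node t p) -> 2 ^ K <= nl t.
Proof.
elim: K t => [|K IH] t h; first by rewrite expn0 nl_pos.
case: t h => [|l r] h; first by move: (h [:: false] isT).
have hl : forall p : npath, size p <= K -> is_node l p by move=> p hp; apply: (h (false :: p)).
have hr : forall p : npath, size p <= K -> is_node r p by move=> p hp; apply: (h (true :: p)).
by rewrite nlN expnS mul2n -addnn leq_add // ?IH.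
Qed.

Open Scope R_scope.

Lemma INR_exp2 k : INR (2 ^ k)%N = 2 ^ k.
Proof.
elim: k => [|k IH] //; rewrite expnS -multE mult_INR IH /=; lra.
Qed.

Lemma ln2_pos : 0 < ln 2.
Proof. have := ln_lt_2; lra. Qed.

Lemma log2_ge (n k : nat) : (0 < n)%N -> (2 ^ k <= n)%N -> INR k <= log2 (INR n).
Proof.
move=> hn hk.
have h2 : 2 ^ k <= INR n by rewrite -INR_exp2; apply: le_INR; apply/leP.
have hp : 0 < 2 ^ k by apply: pow_lt; lra.
have hl : INR k * ln 2 <= ln (INR n).
  rewrite -ln_pow; last lra.
  case: (Rle_lt_or_eq_dec _ _ h2) => [hlt|->]; last lra.
  by apply: Rlt_le; apply: ln_increasing.
have := ln2_pos; rewrite /log2 /Rdiv (_ : INR 2 = 2); last by simpl; lra.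
move=> h.
apply: (Rmult_le_reg_r (ln 2)) => //.
rewrite Rmult_assoc Rinv_l; lra.
Qed.

Lemma real_bound (n k : nat) : (2 <= n)%N -> (2 ^ k <= n)%N ->
  INR ((maxn 1 (2 * k)) ^ 2)%N <= INR 4 * (log2 (INR n)) ^ 2.
Proof.
move=> hn hk.
have hL := @log2_ge n k ltac:(lia) hk.
have hL1 := @log2_ge n 1 ltac:(lia) ltac:(rewrite expn1; lia).
rewrite /= in hL1.
set L := log2 (INR n) in hL hL1 *.
have hm : INR (maxn 1 (2 * k)) <= 2 * L.
  case: k hk hL => [|k] hk hL.
    rewrite (_ : maxn 1 (2 * 0) = 1)%N //=; lra.
  rewrite (_ : maxn 1 (2 * k.+1) = 2 * k.+1)%N; last by lia.
  rewrite -multE mult_INR (_ : INR 2 = 2); [lra | simpl; lra].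
have h0 := pos_INR (maxn 1 (2 * k)).
move: hm h0; set m := maxn 1 (2 * k) => hm h0.
have -> : INR (m ^ 2)%N = INR m * INR m by rewrite expnS expn1 -multE mult_INR.
rewrite (_ : INR 4 = 4); last by rewrite /=; lra.
nra.
Qed.

Close Scope R_scope.

Open Scope R_scope.
Lemma final_real (pcR pcT MM V : nat) (d L : R) : (pcR <= MM * pcT)%N ->
  INR pcT <= d * INR V -> INR MM <= INR 4 * L ^ 2 -> INR pcR <= INR 4 * d * L ^ 2 * INR V.
Proof.
move=> h1 h2 h3.
have h1' : INR pcR <= INR MM * INR pcT.
  by rewrite -mult_INR multE; apply: le_INR; apply/leP.
have p1 := pos_INR pcT; have p2 := pos_INR MM.
have hdV : 0 <= d * INR V by lra.
have h4 : INR MM * INR pcT <= INR MM * (d * INR V) by apply: Rmult_le_compat_l.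
have h5 : INR MM * (d * INR V) <= INR 4 * L ^ 2 * (d * INR V) by apply: Rmult_le_compat_r.
have -> : INR 4 * d * L ^ 2 * INR V = INR 4 * L ^ 2 * (d * INR V) by ring.
lra.
Qed.
Close Scope R_scope.

Theorem lemma4p5 (n : nat) (d : R) (G : rel 'I_n) (T Rt : btree)
    (AT BT : rel npath) :
  2 <= n ->
  size (leaves T) = n ->
  signed_tree_model T AT BT -> clean T AT BT -> sparse d T AT BT ->
  models T AT BT G ->
  size (leaves Rt) = n -> complete Rt ->
  exists AR BR : rel npath,
    signed_tree_model Rt AR BR /\
    sparse (Rmult (Rmult (INR 4) d) (pow (log2 (INR n)) 2)) Rt AR BR /\
    models Rt AR BR G.
Proof.
move=> hn2 hnT hT hc hs hM hnR [hcomp _].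
have hnl : nl Rt = nl T by rewrite /nl hnT hnR.
exists (mkR T AT BT Rt AT), (mkR T AT BT Rt BT).
split; first exact: stm_R hT hnl.
split; last exact: models_R hT hc hnT hnR hM.
have hD : (2 <= depth Rt)%N.
  case: Rt hnR hcomp hnl => [|l r] hnR' _ _; first by move: hnR'; rewrite /= => e; move: hn2; rewrite -e.
  by rewrite /=; have := depth_pos l; lia.
have hlev : (2 ^ (depth Rt - 2) <= n)%N.
  rewrite -hnR -/(nl Rt); apply: full_levels => p hp; apply: hcomp; lia.
have hb := real_bound hn2 hlev.
have hsc := sparse_count hT hnl.
rewrite /sparse; apply: final_real hsc _ _.
  by move: hs; rewrite /sparse !size_nodes hnl.
by rewrite mulnn.
Qed.
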